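(* Let $\mathcal K$ be an abstract Krivine structure and let $\mathcal A_{\mathcal K\bullet}=(\mathcal P_\bullet(\Pi),\circ_\bullet,\to_\bullet,\supseteq,\mathsf k_\bullet,\mathsf s_\bullet,\Phi)$ as defined below. On $\mathcal P_\bullet(\Pi)$ consider the relation $\sqsubseteq_\bullet$: $Q\sqsubseteq_\bullet R$ iff there is $t\in\mathrm{QP}$ with $t\perp Q\to_\bullet R$; and the relation $\sqsubseteq_{\mathcal A}$: $Q\sqsubseteq_{\mathcal A}R$ iff there is $F\in\Phi$ with $F\circ_\bullet Q\supseteq R$. Then these two relations coincide, so $\mathcal H_{\mathcal K\bullet}=(\mathcal P_\bullet(\Pi),\sqsubseteq_\bullet)$ and the preorder $\mathcal H_{\mathcal A_{\mathcal K\bullet}}=(\mathcal P_\bullet(\Pi),\sqsubseteq_{\mathcal A})$ are isomorphic; in particular $\mathcal H_{\mathcal K\bullet}$ is a Heyting preorder.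
   Context: An abstract Krivine structure $\mathcal K$ consists of sets $\Lambda,\Pi$, a relation $\perp\subseteq\Lambda\times\Pi$ ($t\perp P$ means $t\perp\pi$ for all $\pi\in P$), a map $\mathrm{push}$ written $t\cdot\pi$ (associating to the right), an application $ts$ on $\Lambda$ (associating to the left), a subset $\mathrm{QP}\subseteq\Lambda$ closed under application, and $\mathsf K,\mathsf S\in\mathrm{QP}$ with: $t\perp s\cdot\pi\Rightarrow ts\perp\pi$; $t\perp\pi\Rightarrow\mathsf K\perp t\cdot s\cdot\pi$; $tu(su)\perp\pi\Rightarrow\mathsf S\perp t\cdot s\cdot u\cdot\pi$. Polars: $L^\perp=\{\pi:\forall t\in L,\ t\perp\pi\}$, ${}^\perp P=\{t:\forall\pi\in P,\ t\perp\pi\}$; $\overline P=({}^\perp P)^\perp$; $\widehat P=\bigcup_{\pi\in P}\overline{\{\pi\}}$; $\mathcal P_\bullet(\Pi)=\{P:\widehat P=P\}$. For $P,Q\subseteq\Pi$: $P\to_\bullet Q=\widehat{\{t\cdot\pi:t\in{}^\perp P,\pi\in Q\}}$, $P\circ_\bullet Q=\{\pi: t\cdot\pi'\in P\ \forall t\in{}^\perp Q,\ \pi'\in\overline{\{\pi\}}\}$. $\mathsf E=\mathsf S(\mathsf K(\mathsf S\mathsf K\mathsf K))$, $\mathsf B=\mathsf S(\mathsf K\mathsf S)\mathsf K$, $\mathsf k_\bullet=\{\mathsf E\mathsf K\}^\perp$, $\mathsf s_\bullet=\{\mathsf E((\mathsf B\mathsf E)\mathsf S)\}^\perp$, $\Phi=\{P\in\mathcal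 P_\bullet(\Pi):\exists t\in\mathrm{QP},\ t\perp P\}$. $\mathcal A_{\mathcal K\bullet}$ is a full adjunction implicative ordered combinatory algebra with order $P\le Q\iff P\supseteq Q$, and its associated Heyting preorder has underlying preorder $\sqsubseteq_{\mathcal A}$, meet $a\wedge b=\mathsf p\circ_\bullet a\circ_\bullet b$ (with $\mathsf p$ the pairing combinator $\lambda^*x\lambda^*y\lambda^*z.zxy$ built from $\mathsf k_\bullet,\mathsf s_\bullet$) and implication $\to_\bullet$. A Heyting preorder is a preorder with finite meets ($\wedge$, top $\top$) and a binary operation $\to$ with $a\wedge b\le c\iff a\le b\to c$. *)

(* Defs.v *)
Record AKS : Type := {
  Lam : Type;
  Pi : Type;
  perp : Lam -> Pi -> Prop;
  push : Lam -> Pi -> Pi;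
  app : Lam -> Lam -> Lam;
  QP : Lam -> Prop;
  Kc : Lam;
  Sc : Lam;
  QP_app : forall t s, QP t -> QP s -> QP (app t s);
  QP_K : QP Kc;
  QP_S : QP Sc;
  ax_push : forall t s pi, perp t (push s pi) -> perp (app t s) pi;
  ax_K : forall t s pi, perp t pi -> perp Kc (push t (push s pi));
  ax_S : forall t s u pi,
      perp (app (app t u) (app s u)) pi -> perp Sc (push t (push s (push u pi)))
}.

Section Defs.
Variable K : AKS.
Notation Lam := (Lam K).
Notation Pi := (Pi K).

Definition perpset (t : Lam) (P : Pi -> Prop) : Prop :=
  forall pi, P pi -> perp K t pi.
Definition lpolar (P : Pi -> Prop) : Lam -> Prop := fun t => perpset t P.
Definition rpolar (L : Lam -> Prop) : Pi -> Prop :=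
  fun pi => forall t, L t -> perp K t pi.
Definition bar (P : Pi -> Prop) : Pi -> Prop := rpolar (lpolar P).
Definition hat (P : Pi -> Prop) : Pi -> Prop :=
  fun pi => exists pi', P pi' /\ bar (fun x => x = pi') pi.
Definition inPb (P : Pi -> Prop) : Prop := forall pi, hat P pi <-> P pi.

Definition arrowb (P Q : Pi -> Prop) : Pi -> Prop :=
  hat (fun pi => exists t pi', lpolar P t /\ Q pi' /\ pi = push K t pi').
Definition circb (P Q : Pi -> Prop) : Pi -> Prop :=
  fun pi => forall t pi', lpolar Q t -> bar (fun x => x = pi) pi' ->
                          P (push K t pi').

Definition Phib (P : Pi -> Prop) : Prop :=
  inPb P /\ exists t, QP K t /\ perpset t P.

Definition sqle_b (Q R : Pi -> Prop) : Prop :=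
  exists t, QP K t /\ perpset t (arrowb Q R).
Definition sqle_A (Q R : Pi -> Prop) : Prop :=
  exists F, Phib F /\ (forall pi, R pi -> circb F Q pi).

Definition HeytingPreorder (le : (Pi -> Prop) -> (Pi -> Prop) -> Prop) : Prop :=
  (forall a, inPb a -> le a a) /\
  (forall a b c, inPb a -> inPb b -> inPb c -> le a b -> le b c -> le a c) /\
  (exists top, inPb top /\ forall a, inPb a -> le a top) /\
  (exists meet imp : (Pi -> Prop) -> (Pi -> Prop) -> (Pi -> Prop),
     (forall a b, inPb a -> inPb b -> inPb (meet a b)) /\
     (forall a b, inPb a -> inPb b -> inPb (imp a b)) /\
     (forall a b, inPb a -> inPb b -> le (meet a b) a) /\
     (forall a b, inPb a -> inPb b -> le (meet a b) b) /\
     (forall a b c, inPb a -> inPb b -> inPb c ->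
        le c a -> le c b -> le c (meet a b)) /\
     (forall a b c, inPb a -> inPb b -> inPb c ->
        (le (meet a b) c <-> le a (imp b c)))).

End Defs.

(* Main.v *)
Require Import Defs.

Section Help.
Variable K : AKS.
Local Notation "t ⊥ p" := (perp K t p) (at level 70).
Local Notation "s · p" := (push K s p) (at level 60, right associativity).
Local Notation "t @ s" := (app K t s) (at level 40, left associativity).
Local Notation KK := (Kc K). Local Notation SS := (Sc K).
Definition cI := SS @ KK @ KK.
Definition cB := SS @ (KK @ SS) @ KK.
Definition cT := SS @ (KK @ (SS @ cI)) @ KK.
Definition cP := cB @ (SS @ (cB @ cB @ cT)) @ (cB @ KK @ cT).
Definition cE t := SS @ (KK @ cI) @ t.
Ltac rd := unfold cE, cP, cT, cB, cI;
  repeat (first [ assumption | apply ax_K | apply ax_S | apply ax_push ]).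
Ltac qp := unfold cE, cP, cT, cB, cI;
  repeat (first [ assumption | apply QP_K | apply QP_S | apply QP_app ]).

Lemma E_red t s p : t @ s ⊥ p -> cE t ⊥ s · p.
Proof. intro H. rd. Qed.
Lemma P_red x y z p : z ⊥ KK @ x @ z · KK @ y @
      (SS @ (KK @ SS) @ KK @ KK @ (SS @ (KK @ (SS @ (SS @ KK @ KK))) @ KK) @
       x @ y @ z) · p -> cP ⊥ x·y·z·p.
Proof. intro H. rd. Qed.
Lemma Kx_le x z P : perpset K x P -> perpset K (KK @ x @ z) P.
Proof. intros H p Hp. rd. apply H; auto. Qed.

Lemma bar_refl p : bar K (fun x => x = p) p.
Proof. intros t Ht. apply Ht. reflexivity. Qed.
Lemma hat_sub (P : Pi K -> Prop) p : P p -> hat K P p.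
Proof. intro H. exists p. split; auto. apply bar_refl. Qed.
Lemma lpolar_hat P t : perpset K t P -> perpset K t (hat K P).
Proof. intros H p [p' [Hp' Hb]]. apply Hb. intros x ->. auto. Qed.
Lemma hat_inPb P : inPb K (hat K P).
Proof.
  intro p; split; [|apply hat_sub].
  intros [p1 [[p2 [H2 Hb2]] Hb1]]. exists p2. split; auto.
  intros t Ht. apply Hb1. intros x ->. apply Hb2. auto.
Qed.
Lemma arrow_in Q R t : perpset K t (arrowb K Q R) ->
  forall s p, lpolar K Q s -> R p -> t ⊥ s · p.
Proof. intros H s p Hs Hp. apply H, hat_sub. eauto 6. Qed.
Lemma arrow_out Q R t : (forall s p, lpolar K Q s -> R p -> t ⊥ s · p) ->
  perpset K t (arrowb K Q R).
Proof. intros H. apply lpolar_hat. intros p (s & p' & Hs & Hp & ->). auto. Qed.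
Lemma arrow_hat Q X t : (forall s p, lpolar K Q s -> X p -> t ⊥ s · p) ->
  perpset K (cE t) (arrowb K Q (hat K X)).
Proof.
  intros H. apply arrow_out. intros s p Hs [p' [Hp' Hb]].
  apply E_red. apply Hb. intros x ->. apply ax_push. auto.
Qed.

Definition Mraw (a b : Pi K -> Prop) : Pi K -> Prop := fun r =>
  exists u p, r = u · p /\ forall s1 s2, lpolar K a s1 -> lpolar K b s2 -> u ⊥ s1 · s2 · p.
Definition Mt a b := hat K (Mraw a b).

Definition le := sqle_b K.

Lemma Heyt : HeytingPreorder K le.
Proof.
  split; [|split; [|split]].
  - intros a _. exists cI. split; [qp|]. apply arrow_out. intros s p Hs Hp. rd. auto.
  - intros a b c _ _ _ [t1 [Q1 H1]] [t2 [Q2 H2]]. exists (cB @ t2 @ t1). split; [qp|].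
    apply arrow_out. intros s p Hs Hp. rd. apply (arrow_in _ _ _ H2); auto.
    intros p' Hp'. apply ax_push. apply (arrow_in _ _ _ H1); auto.
  - exists (fun _ => False). split.
    + intro p; split; [intros [p' [[] _]] | intros []].
    + intros a _. exists KK. split; [apply QP_K|]. apply arrow_out. intros _ _ _ [].
  - exists Mt, (arrowb K). split; [|split; [|split; [|split; [|split]]]].
    + intros; apply hat_inPb.
    + intros; apply hat_inPb.
    + intros a b _ _. exists (SS @ cI @ (KK @ KK)). split; [qp|].
      apply arrow_out. intros w p Hw Hp. rd. apply Hw, hat_sub.
      do 2 eexists; split; [reflexivity|]. intros s1 s2 H1 H2. rd. auto.
    + intros a b _ _. exists (SS @ cI @ (KK @ (KK @ cI))). split; [qp|].
      apply arrow_out. intros w p Hw Hp. rd. apply Hw, hat_sub.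
      do 2 eexists; split; [reflexivity|]. intros s1 s2 H1 H2. rd. auto.
    + intros a b c _ _ _ [t1 [Q1 H1]] [t2 [Q2 H2]].
      exists (cE (SS @ (cB @ cP @ t1) @ t2)). split; [qp|].
      apply arrow_hat. intros s r Hs (u & p & -> & Hu).
      rd. apply Hu; apply Kx_le; intros p' Hp'; apply ax_push.
      * apply (arrow_in _ _ _ H1); auto.
      * apply (arrow_in _ _ _ H2); auto.
    + intros a b c _ _ _. split.
      * intros [t [Qt Ht]]. exists (cE (cB @ (cB @ t) @ cP)). split; [qp|].
        apply arrow_hat. intros s r Hs (s' & p & Hs' & Hp & ->). rd.
        apply (arrow_in _ _ _ Ht); auto. apply lpolar_hat.
        intros r' (u & p' & -> & Hu). rd. apply Hu; apply Kx_le; auto.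
      * intros [t [Qt Ht]]. exists (cT @ t). split; [qp|].
        apply arrow_out. intros w p Hw Hp. rd. apply Hw, hat_sub.
        do 2 eexists; split; [reflexivity|]. intros s1 s2 H1 H2. rd.
        apply (arrow_in _ _ _ Ht); auto. apply hat_sub. eauto 6.
Qed.

Lemma part1 Q R : inPb K Q -> inPb K R -> (sqle_b K Q R <-> sqle_A K Q R).
Proof.
  intros _ HR. split.
  - intros [t [Qt Ht]]. exists (arrowb K Q R). split.
    + split; [apply hat_inPb | eauto].
    + intros p Hp s p' Hs Hb. apply hat_sub. do 2 eexists; split; [eauto|split; [|reflexivity]].
      apply HR. exists p; auto.
  - intros [F [[_ [u [Qu Hu]]] HF]]. exists u. split; auto.
    apply arrow_out. intros s p Hs Hp. apply Hu. apply (HF p Hp s p Hs (bar_refl p)).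
Qed.
End Help.

Theorem mainTheorem10 (K : AKS) :
  (forall Q R : Pi K -> Prop, inPb K Q -> inPb K R ->
     (sqle_b K Q R <-> sqle_A K Q R)) /\
  HeytingPreorder K (sqle_b K).
Proof.
  split. - apply part1. - apply Heyt.
Qed.
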